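(* Let $\mathcal H$ be a separable complex Hilbert space, $A\in L(\mathcal H)^+$, $\mathcal S\subseteq\mathcal H$ a closed subspace, and let $T\in L(\mathcal H)$ satisfy $R(T)\subseteq\mathcal S$. The following are equivalent: (1) $T$ is an $A$-projection into $\mathcal S$; (2) $AT=T^*A$ and $ATP_{\mathcal S}=AP_{\mathcal S}$; (3) $P_{\mathcal S}AT=P_{\mathcal S}A$.
   Context: $L(\mathcal H)$ denotes bounded linear operators on $\mathcal H$, $L(\mathcal H)^+$ the positive (semidefinite) ones, $R(\cdot)$ the range, and $P_{\mathcal S}$ the orthogonal projection onto $\mathcal S$. For $A\in L(\mathcal H)^+$, $\|x\|_A=\langle Ax,x\rangle^{1/2}$. An operator $T\in L(\mathcal H)$ is an $A$-projection into $\mathcal S$ if $R(T)\subseteq\mathcal S$ and $\|y-Ty\|_A\le\|y-s\|_A$ for all $y\in\mathcal H$ and all $s\in\mathcal S$. *)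

(* Defs.v *)
(* A separable complex Hilbert space is encoded as a
   left module V over the complex numbers C := R[i] (R : realType) with an
   inner product (linear in the first argument, conjugate-symmetric,
   positive definite), complete for the induced norm. *)
From HB Require Import structures.
From mathcomp Require Import all_boot all_order all_algebra.
From mathcomp Require Import complex reals.
Set Implicit Arguments. Unset Strict Implicit. Unset Printing Implicit Defensive.
Import Order.TTheory GRing.Theory Num.Theory.
Local Open Scope ring_scope.

Section HilbertDefs.
Variable R : realType.
Variable V : lmodType R[i].
Variable inner : V -> V -> R[i].

Definition hnorm (x : V) : R[i] := sqrtC (inner x x).

Definition inner_product_axioms : Prop :=
  [/\ (forall (a : R[i]) (x y z : V), inner (a *: x + y) z = a * inner x z + inner y z),
      (forall x y : V, inner y x = (inner x y)^*),
      (forall x : V, 0 <= inner x x) &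
      (forall x : V, inner x x = 0 -> x = 0)].

Definition cvg_to (u : nat -> V) (l : V) : Prop :=
  forall eps : R[i], 0 < eps -> exists N : nat, forall n, (N <= n)%N -> hnorm (u n - l) < eps.

Definition cauchy_seq (u : nat -> V) : Prop :=
  forall eps : R[i], 0 < eps -> exists N : nat, forall m n, (N <= m)%N -> (N <= n)%N ->
    hnorm (u m - u n) < eps.

Definition complete_space : Prop :=
  forall u : nat -> V, cauchy_seq u -> exists l, cvg_to u l.

Definition hilbert_space : Prop := inner_product_axioms /\ complete_space.

Definition separable : Prop :=
  exists d : nat -> V, forall (x : V) (eps : R[i]), 0 < eps -> exists n, hnorm (x - d n) < eps.

Definition bounded_op (T : V -> V) : Prop :=
  (forall (a : R[i]) (x y : V), T (a *: x + y) = a *: T x + T y) /\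
  exists M : R[i], 0 <= M /\ forall x, hnorm (T x) <= M * hnorm x.

Definition positive_op (A : V -> V) : Prop :=
  bounded_op A /\ forall x, 0 <= inner (A x) x.

Definition closed_subspace (S : V -> Prop) : Prop :=
  [/\ S 0,
      (forall (a : R[i]) x y, S x -> S y -> S (a *: x + y)) &
      (forall (u : nat -> V) l, (forall n, S (u n)) -> cvg_to u l -> S l)].

Definition orth_proj (S : V -> Prop) (P : V -> V) : Prop :=
  (forall x, S (P x)) /\ (forall x s, S s -> inner (x - P x) s = 0).

Definition adjoint (T Ts : V -> V) : Prop :=
  forall x y, inner (T x) y = inner x (Ts y).

Definition Anorm (A : V -> V) (x : V) : R[i] := sqrtC (inner (A x) x).

Definition A_projection (A : V -> V) (S : V -> Prop) (T : V -> V) : Prop :=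
  (forall y, S (T y)) /\
  (forall y s, S s -> Anorm A (y - T y) <= Anorm A (y - s)).

End HilbertDefs.

(* Main.v *)
Require Import Defs.
From HB Require Import structures.
From mathcomp Require Import all_boot all_order all_algebra.
From mathcomp Require Import complex reals ring.
Import Order.TTheory GRing.Theory Num.Theory.
Set Implicit Arguments. Unset Strict Implicit.
Local Open Scope ring_scope.

Section Inner.
Variable R : realType.
Variable V : lmodType R[i].
Variable inner : V -> V -> R[i].
Hypothesis Hip : inner_product_axioms inner.

Lemma innerDZl a x y z : inner (a *: x + y) z = a * inner x z + inner y z.
Proof. by have [h _ _ _] := Hip; apply: h. Qed.
Lemma innerC x y : inner y x = (inner x y)^*.
Proof. by have [_ h _ _] := Hip; apply: h. Qed.
Lemma inner_ge0 x : 0 <= inner x x.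
Proof. by have [_ _ h _] := Hip; apply: h. Qed.
Lemma inner_def x : inner x x = 0 -> x = 0.
Proof. by have [_ _ _ h] := Hip; apply: h. Qed.

Lemma innerDl x y z : inner (x + y) z = inner x z + inner y z.
Proof. by rewrite -[x]scale1r innerDZl mul1r scale1r. Qed.
Lemma inner0l z : inner 0 z = 0.
Proof.
have h := innerDl 0 0 z; rewrite addr0 in h.
have : inner 0 z + 0 = inner 0 z + inner 0 z by rewrite addr0.
by move/addrI.
Qed.
Lemma innerZl a x z : inner (a *: x) z = a * inner x z.
Proof. by rewrite -[a *: x]addr0 innerDZl inner0l addr0. Qed.
Lemma innerNl x z : inner (- x) z = - inner x z.
Proof. by rewrite -scaleN1r innerZl mulN1r. Qed.
Lemma innerBl x y z : inner (x - y) z = inner x z - inner y z.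
Proof. by rewrite innerDl innerNl. Qed.
Lemma innerDr x y z : inner z (x + y) = inner z x + inner z y.
Proof. by rewrite innerC innerDl rmorphD /= -!innerC. Qed.
Lemma innerZr a x z : inner z (a *: x) = a^* * inner z x.
Proof. by rewrite innerC innerZl rmorphM /= -innerC. Qed.
Lemma inner0r z : inner z 0 = 0.
Proof. by rewrite innerC inner0l rmorph0. Qed.
Lemma inner_eq0 d : (forall z, inner d z = 0) -> d = 0.
Proof. by move=> h; apply: inner_def; apply: h. Qed.
Lemma inner_eq x y : (forall z, inner x z = inner y z) -> x = y.
Proof.
move=> h; apply/eqP; rewrite -subr_eq0; apply/eqP; apply: inner_eq0 => z.
by rewrite innerBl h subrr.
Qed.
End Inner.

Section Op.
Variable R : realType.
Variable V : lmodType R[i].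
Variable inner : V -> V -> R[i].
Hypothesis Hip : inner_product_axioms inner.
Variable A : V -> V.
Hypothesis Alin : forall (a : R[i]) (x y : V), A (a *: x + y) = a *: A x + A y.
Hypothesis Apos : forall x, 0 <= inner (A x) x.

Lemma AD x y : A (x + y) = A x + A y.
Proof. by rewrite -[x]scale1r Alin !scale1r. Qed.
Lemma A0 : A 0 = 0.
Proof.
have h := AD 0 0; rewrite addr0 in h.
have : A 0 + 0 = A 0 + A 0 by rewrite addr0.
by move/addrI.
Qed.
Lemma AZ a x : A (a *: x) = a *: A x.
Proof. by rewrite -[a *: x]addr0 Alin A0 addr0. Qed.
Lemma AB x y : A (x - y) = A x - A y.
Proof. by rewrite AD -scaleN1r AZ scaleN1r. Qed.

Lemma A_sa x y : inner (A x) y = inner x (A y).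
Proof.
set a := inner (A x) y; set b := inner (A y) x.
have e1 : a^* + b^* - a - b = 0.
  have := geC0_conj (Apos (x + y)).
  rewrite AD !(innerDl Hip, innerDr Hip) !rmorphD /= (geC0_conj (Apos x)) (geC0_conj (Apos y)).
  rewrite -/a -/b => /eqP; rewrite -subr_eq0 => /eqP h.
  by rewrite -h; ring.
have e2 : a^* - b^* + a - b = 0.
  have := geC0_conj (Apos (x + 'i *: y)).
  rewrite AD AZ !(innerDl Hip, innerDr Hip, innerZl Hip, innerZr Hip) !rmorphD !rmorphM /=.
  rewrite (geC0_conj (Apos x)) (geC0_conj (Apos y)) !conjCK !conjCi.
  rewrite -/a -/b => /eqP; rewrite -subr_eq0 => /eqP h.
  have : 'i * (a^* - b^* + a - b) = 0 by rewrite -h; ring.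
  by move/eqP; rewrite mulf_eq0 (negPf (@neq0Ci _)) /= => /eqP.
have : b - a^* = 0.
  rewrite (_ : b - a^* = - (a^* + b^* - a - b + (a^* - b^* + a - b)) / 2).
    by rewrite e1 e2 addr0 oppr0 mul0r.
  by field.
move/eqP; rewrite subr_eq0 => /eqP hb.
by rewrite (innerC Hip (A y) x) -/b hb conjCK.
Qed.
End Op.

Section Main.
Variable R : realType.
Variable V : lmodType R[i].
Variable inner : V -> V -> R[i].
Hypothesis Hip : inner_product_axioms inner.
Variable A : V -> V.
Hypothesis Alin : forall (a : R[i]) (x y : V), A (a *: x + y) = a *: A x + A y.
Hypothesis Apos : forall x, 0 <= inner (A x) x.
Variable S : V -> Prop.
Hypothesis Sclos : forall (a : R[i]) x y, S x -> S y -> S (a *: x + y).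
Variables T PS Tadj : V -> V.
Hypothesis HT : forall y, S (T y).
Hypothesis PSin : forall x, S (PS x).
Hypothesis PSorth : forall x s, S s -> inner (x - PS x) s = 0.
Hypothesis Hadj : forall x y, inner (T x) y = inner x (Tadj y).

Let sa := A_sa Hip Alin Apos.
Let iC := innerC Hip.

Definition Qp := forall y s, S s -> inner (A (T y)) s = inner (A y) s.

Lemma SB x y : S x -> S y -> S (x - y).
Proof. by move=> hx hy; have := Sclos (-1) hy hx; rewrite scaleN1r addrC. Qed.

Lemma inner_PS a s : S s -> inner (PS a) s = inner a s.
Proof.
move=> Ss; have := PSorth a Ss; rewrite (innerBl Hip) => /eqP.
by rewrite subr_eq0 => /eqP ->.
Qed.

Lemma PS_eq a b : PS a = PS b <-> forall s, S s -> inner a s = inner b s.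
Proof.
split=> [h s Ss|h]; first by rewrite -(inner_PS a Ss) -(inner_PS b Ss) h.
apply/eqP; rewrite -subr_eq0; apply/eqP; apply: (inner_def Hip).
have Sd := SB (PSin a) (PSin b).
by rewrite (innerBl Hip) !inner_PS // h // subrr.
Qed.

Lemma PS_fix s : S s -> PS s = s.
Proof.
move=> Ss; apply/eqP; rewrite -subr_eq0; apply/eqP; apply: (inner_def Hip).
have Sd := SB (PSin s) Ss.
by rewrite -{1}opprB (innerNl Hip) PSorth // oppr0.
Qed.

Lemma P3_Q : (forall x, PS (A (T x)) = PS (A x)) <-> Qp.
Proof.
split=> [h y s Ss|h x]; first by move: s Ss; apply/PS_eq.
by apply/PS_eq => s Ss; apply: h.
Qed.

Lemma Aproj_Q : A_projection inner A S T <-> Qp.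
Proof.
split.
- move=> [_ Hmin] y s Ss.
  set u := y - T y; set c := inner (A u) s.
  suff c0 : c = 0.
    move: c0; rewrite /c /u (AB Alin) (innerBl Hip) => /eqP.
    by rewrite subr_eq0 => /eqP ->.
  set a := inner (A s) s.
  have ha1 : 0 < a + 1 by apply: ltr_wpDl; [exact: Apos | exact: ltr01].
  set e := (a + 1)^-1.
  have ee : e^* = e by apply: geC0_conj; rewrite invr_ge0 ltW.
  set k := - (e * c).
  have Sk : S ((- k) *: s + T y) by apply: Sclos.
  have := Hmin y _ Sk.
  have -> : y - ((- k) *: s + T y) = u + k *: s.
    by rewrite scaleNr opprD opprK addrA addrAC.
  rewrite /Anorm ler_sqrtC ?nnegrE //.
  rewrite (AD Alin u (k *: s)) (AZ Alin k s) (innerDl Hip (A u)) !(innerDr Hip _ (k *: s)) !(innerZr Hip) !(innerZl Hip k).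
  rewrite -/c -/a (sa s u) (iC (A u) s) -/c /k rmorphN rmorphM /= ee -/u.
  rewrite -subr_ge0.
  rewrite (_ : _ - _ = - (c * c^* * (a + 2) / (a + 1) ^+ 2)); last first.
    by rewrite /e; field; rewrite lt0r_neq0.
  rewrite oppr_ge0 => hle.
  have hge : 0 <= c * c^* * (a + 2) / (a + 1) ^+ 2.
    apply: mulr_ge0; last by rewrite invr_ge0 exprn_ge0 // ltW.
    apply: mulr_ge0; first exact: mul_conjC_ge0.
    by apply: addr_ge0; [exact: Apos | rewrite ler0n].
  have := le_anti (andb_true_intro (conj hle hge)).
  have ha2 : a + 2 != 0.
    by apply/lt0r_neq0; apply: ltr_wpDl; [exact: Apos | by rewrite ltr0n].
  move/eqP; rewrite !mulf_eq0 invr_eq0 expf_eq0 (negPf (lt0r_neq0 ha1)) andbF orbF.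
  by rewrite (negPf ha2) orbF conjC_eq0 orbb => /eqP.
- move=> hQ; split=> // y s Ss.
  set u := y - T y; set w := T y - s.
  have Sw : S w by apply: SB.
  have -> : y - s = u + w by rewrite /u /w addrA subrK.
  rewrite /Anorm ler_sqrtC ?nnegrE //.
  have c0 : inner (A u) w = 0 by rewrite /u (AB Alin) (innerBl Hip) hQ // subrr.
  rewrite -/u (AD Alin u w) (innerDl Hip (A u) (A w)) !(innerDr Hip u w) c0 (sa w u) (iC (A u) w) c0 rmorph0.
  by rewrite addr0 add0r lerDl.
Qed.

Lemma Q2 : Qp <-> ((forall x, A (T x) = Tadj (A x)) /\ (forall x, A (T (PS x)) = A (PS x))).
Proof.
split.
- move=> hQ; split.
  + move=> x; apply: (inner_eq Hip) => z.
    transitivity (inner x (A (T z))).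
      rewrite (sa (T x) z) (iC (A z) (T x)) -(hQ z (T x) (HT x)) -(iC (A (T z)) (T x)).
      by rewrite -(sa (T x) (T z)) (hQ x (T z) (HT z)) (sa x (T z)).
    by rewrite (iC z (Tadj (A x))) -(Hadj z (A x)) -(sa (T z) x) -(iC (A (T z)) x).
  + move=> x; apply: (inner_eq Hip) => z.
    have Sp := PSin x; set p := PS x in Sp *.
    rewrite (sa (T p) z) (iC (A z) (T p)) -(hQ z (T p) (HT p)) -(iC (A (T z)) (T p)).
    rewrite -(sa (T p) (T z)) (hQ p (T z) (HT z)) (sa p (T z)) (iC (A (T z)) p).
    by rewrite (hQ z p Sp) -(iC (A z) p) -(sa p z).
- move=> [h1 h2] y s Ss.
  have e := h2 s; rewrite (PS_fix Ss) in e.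
  rewrite h1 (iC s (Tadj (A y))) -(Hadj s (A y)) -(sa (T s) y) e (sa s y).
  by rewrite (iC s (A y)).
Qed.
End Main.

Theorem mainTheorem1 (R : realType) (V : lmodType R[i]) (inner : V -> V -> R[i])
  (HH : hilbert_space inner) (Hsep : separable inner)
  (A : V -> V) (S : V -> Prop) (T PS Tadj : V -> V) :
  positive_op inner A ->
  closed_subspace inner S ->
  bounded_op inner T ->
  (forall y, S (T y)) ->
  orth_proj inner S PS ->
  adjoint inner T Tadj ->
  (A_projection inner A S T <->
     ((forall x, A (T x) = Tadj (A x)) /\ (forall x, A (T (PS x)) = A (PS x)))) /\
  (A_projection inner A S T <->
     (forall x, PS (A (T x)) = PS (A x))).
Proof.
move=> [[Alin _] Apos] [_ Sclos _] _ HT [PSin PSorth] Hadj.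
have Hip := HH.1.
have HA : A_projection inner A S T <-> Qp inner A S T by apply: Aproj_Q.
have H2 : Qp inner A S T <-> ((forall x, A (T x) = Tadj (A x)) /\ (forall x, A (T (PS x)) = A (PS x))) by apply: Q2.
have H3 : (forall x, PS (A (T x)) = PS (A x)) <-> Qp inner A S T by apply: P3_Q.
split; first exact: iff_trans HA H2.
exact: iff_trans HA (iff_sym H3).
Qed.
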